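(* Let $\chi\in M_{\mathbb{R}}$ with $r(\chi)=r$, and let $\lambda$ be a cocharacter of $SG(d)$ with $\chi\in F_r(\lambda)$. Then there exist $c\in\mathbb{R}$ and coefficients $c_\beta$ for $\beta\in\mathcal{W}$ with \[c_\beta=0 \text{ if } \langle\lambda,\beta\rangle<0,\qquad c_\beta=-r \text{ if } \langle\lambda,\beta\rangle>0,\qquad c_\beta\in[-r,0]\text{ if }\langle\lambda,\beta\rangle=0,\] such that $\chi=\sum_{\beta\in\mathcal{W}}c_\beta\beta+c\tau_d$. Conversely, every $\chi\in r\mathbb{W}$ of this form lies on $F_r(\lambda)$. Consequently, if $\mu$ is a cocharacter of $SG(d)$ with $F_r(\mu)\subset F_r(\lambda)$, then $\mu\ge\lambda$. Moreover, if $\chi\in F_r(\lambda)^{\mathrm{int}}$, then the coefficients $c_\beta$ with $\langle\lambda,\beta\rangle=0$ can be chosen in $(-r,0]$.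
   Context: Let $Q=(I,E)$ be a symmetric quiver (for all $i,j\in I$ the number of arrows $i\to j$ equals the number of arrows $j\to i$), with source and target maps $s,t$. Fix $d\in\mathbb{N}^I$ and let $R(d)=\bigoplus_{a\in E}\mathrm{Hom}(\mathbb{C}^{d_{s(a)}},\mathbb{C}^{d_{t(a)}})$ with $G(d)=\prod_i GL(d_i)$ acting by conjugation. Standing assumption: the subquiver of $Q$ on the vertices $i$ with $d_i\neq0$ is connected and is not the quiver with one vertex and no arrows. Let $M=\bigoplus_{i\in I,1\le j\le d_i}\mathbb{Z}\beta^i_j$ be the weight lattice of the diagonal torus $T(d)$, $M_{\mathbb{R}}=M\otimes\mathbb{R}$, $N$ the dual (coweight) lattice, $\langle\,,\rangle$ the pairing. Let $\mathcal{W}$ be the multiset of $T(d)$-weights of $R(d)$ (for each arrow $a:i\to j$ and $x\le d_i$, $y\le d_j$, the weight $\beta^j_y-\beta^i_x$). Let $\tau_d=(\sum_{i,j}\beta^i_j)/(\sum_i d_i)$ and $\mathbb{W}=\sum_{\beta\in\mathcal{W}}[0,\beta]+\mathbb{R}\tau_d\subset M_{\mathbb{R}}$ (Minkowski sum). For $\chi\in M_{\mathbb{R}}$, $r(\chi)$ is the smallest $r\ge0$ with $\chi\in r\mathbb{W}$. A cocharacter of $SG(d)$ (the kernel of the product of determinants) means here an element $\lambda\in N$ with $\langle\lambda,\sum_{i,j}\beta^i_j\rangle=0$. Set $N^{\lambda>0}:=\sum_{\beta\in\mathcal{W},\,\langle\lambda,\beta\rangle>0}\beta$. For $r\ge0$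 let $H_r(\lambda)=\{\psi\in M_{\mathbb{R}}:\langle\lambda,\psi\rangle+r\langle\lambda,N^{\lambda>0}\rangle=0\}$ and $F_r(\lambda)=H_r(\lambda)\cap r\mathbb{W}$. Write $\mu\ge\lambda$ if every $\beta\in\mathcal{W}$ with $\langle\lambda,\beta\rangle>0$ satisfies $\langle\mu,\beta\rangle>0$, and $\mu>\lambda$ if $\mu\ge\lambda$ but not $\lambda\ge\mu$. Let $F_r(\lambda)^{\mathrm{int}}:=F_r(\lambda)\setminus\bigcup_{\mu>\lambda}F_r(\mu)$. *)

(* Defs.v *)
From HB Require Import structures.
From mathcomp Require Import all_boot all_order all_algebra.
From mathcomp Require Import reals.
Set Implicit Arguments.
Unset Strict Implicit.
Unset Printing Implicit Defensive.
Import Order.TTheory GRing.Theory Num.Theory.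
Local Open Scope ring_scope.

Section QuiverWeights.
Variables (R : realType) (I E : finType) (s t : E -> I) (d : I -> nat).

Definition symmetric_quiver : Prop :=
  forall i j : I, #|[pred a | (s a == i) && (t a == j)]|%N =
                  #|[pred a | (s a == j) && (t a == i)]|%N.

Definition supp (i : I) : bool := d i != 0%N.
Definition supp_adj : rel I := fun i j =>
  [&& supp i, supp j &
      [exists a, ((s a == i) && (t a == j)) || ((s a == j) && (t a == i))]].

(** Standing assumption: the full subquiver on {i | d_i <> 0} is (nonempty and)
    connected, and is not the quiver with one vertex and no arrows. *)
Definition standing_assumption : Prop :=
  [/\ exists i, supp i,
      forall i j, supp i -> supp j -> connect supp_adj i j
    & ~ (exists i, (forall j, supp j -> j = i) /\
                   (forall a : E, ~ (s a = i /\ t a = i)))].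

(** Index set of the basis beta^i_j of M: pairs (i, j) with j < d_i. *)
Local Notation K := {i : I & 'I_(d i)}.
(** Index set of the multiset W: (a, x, y) with x < d_{s a}, y < d_{t a}. *)
Local Notation Wi := {a : E & ('I_(d (s a)) * 'I_(d (t a)))%type}.

(** Elements of M_R are functions K -> R, elements of N are functions K -> int. *)
Definition pairing (l : K -> int) (v : K -> R) : R :=
  \sum_(k : K) (l k)%:~R * v k.

(** The weight beta^{t a}_y - beta^{s a}_x attached to b = (a, x, y). *)
Definition wsrc (b : Wi) : K := Tagged (fun i => 'I_(d i)) (tagged b).1.
Definition wtgt (b : Wi) : K := Tagged (fun i => 'I_(d i)) (tagged b).2.
Definition wt (b : Wi) : K -> R :=
  fun k => (k == wtgt b)%:R - (k == wsrc b)%:R.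

(** tau_d = (sum_{i,j} beta^i_j) / (sum_i d_i). *)
Definition tau : K -> R := fun _ => ((\sum_(i : I) d i)%N)%:R^-1.

(** Cocharacters of SG(d): <lambda, sum beta^i_j> = 0. *)
Definition SG_cochar (l : K -> int) : Prop := \sum_(k : K) l k = 0.

(** The polytope-plus-line bW = sum_{beta in W} [0, beta] + R tau_d. *)
Definition in_bW (w : K -> R) : Prop :=
  exists (tt : Wi -> R) (c : R), (forall b, 0 <= tt b <= 1) /\
    forall k, w k = \sum_(b : Wi) tt b * wt b k + c * tau k.

Definition in_rbW (r : R) (v : K -> R) : Prop :=
  exists w, in_bW w /\ forall k, v k = r * w k.

Definition r_of_is (chi : K -> R) (r : R) : Prop :=
  [/\ 0 <= r, in_rbW r chi & forall r', 0 <= r' -> in_rbW r' chi -> r <= r'].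

Definition Npos (l : K -> int) : K -> R :=
  fun k => \sum_(b : Wi | 0 < pairing l (wt b)) wt b k.

Definition in_H (r : R) (l : K -> int) (psi : K -> R) : Prop :=
  pairing l psi + r * pairing l (Npos l) = 0.

Definition in_F (r : R) (l : K -> int) (psi : K -> R) : Prop :=
  in_H r l psi /\ in_rbW r psi.

Definition cochar_ge (mu l : K -> int) : Prop :=
  forall b : Wi, 0 < pairing l (wt b) -> 0 < pairing mu (wt b).
Definition cochar_gt (mu l : K -> int) : Prop :=
  cochar_ge mu l /\ ~ cochar_ge l mu.

Definition in_Fint (r : R) (l : K -> int) (psi : K -> R) : Prop :=
  in_F r l psi /\ forall mu, SG_cochar mu -> cochar_gt mu l -> ~ in_F r mu psi.

Definition of_form (strict : bool) (r : R) (l : K -> int) (chi : K -> R) : Prop :=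
  exists (cb : Wi -> R) (c : R),
    [/\ forall b, pairing l (wt b) < 0 -> cb b = 0,
        forall b, 0 < pairing l (wt b) -> cb b = - r,
        forall b, pairing l (wt b) = 0 ->
                  (if strict then - r < cb b else - r <= cb b) /\ cb b <= 0
      & forall k, chi k = \sum_(b : Wi) cb b * wt b k + c * tau k].

End QuiverWeights.

(* Main.v *)
Require Import Defs.
From HB Require Import structures.
From mathcomp Require Import all_boot all_order all_algebra.
From mathcomp Require Import reals boolp ring lra zify.
Import Order.TTheory GRing.Theory Num.Theory.
Local Open Scope ring_scope.
Set Implicit Arguments.
Unset Strict Implicit.
Unset Printing Implicit Defensive.

Section Aux.
Variables (R : realType) (I E : finType) (s t : E -> I) (d : I -> nat).
Local Notation K := {i : I & 'I_(d i)}.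
Local Notation Wi := {a : E & ('I_(d (s a)) * 'I_(d (t a)))%type}.
Local Notation wsrc := (@wsrc I E s t d).
Local Notation wtgt := (@wtgt I E s t d).
Local Notation wt := (@wt R I E s t d).
Local Notation tauR := (@tau R I d).

Lemma sum_pick (F : K -> R) (y : K) : \sum_k F k * (k == y)%:R = F y.
Proof.
rewrite (bigD1 y) //= eqxx mulr1 big1 ?addr0 // => k /negbTE ->; by rewrite mulr0.
Qed.

Lemma pairing_wt (l : K -> int) (b : Wi) :
  pairing l (wt b) = (l (wtgt b) - l (wsrc b))%:~R.
Proof.
rewrite /pairing /Defs.wt.
under eq_bigr do rewrite mulrBr.
by rewrite sumrB !sum_pick intrB.
Qed.

Lemma pairing_lin (l : K -> int) (x : Wi -> R) (c : R) :
  pairing l (fun k => \sum_b x b * wt b k + c * tauR k) =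
  \sum_b x b * pairing l (wt b) + c * pairing l tauR.
Proof.
rewrite /pairing.
under eq_bigr do rewrite mulrDr mulr_sumr.
rewrite big_split /= exchange_big /=; congr (_ + _).
  by apply: eq_bigr => b _; rewrite mulr_sumr; apply: eq_bigr => k _; rewrite mulrCA.
by rewrite mulr_sumr; apply: eq_bigr => k _; rewrite mulrCA.
Qed.

Lemma pairing_tau (l : K -> int) : SG_cochar l -> pairing l tauR = 0.
Proof.
move=> H; rewrite /pairing /tau -mulr_suml rmorph_sum.
have E0 : (\sum_i (l i)%:~R : R) = ((\sum_i l i)%:~R) by rewrite rmorph_sum.
by rewrite E0 H mul0r.
Qed.

Lemma pairing_Npos (l : K -> int) :
  pairing l (@Npos R I E s t d l) = \sum_(b | 0 < pairing l (wt b)) pairing l (wt b).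
Proof.
rewrite /pairing /Npos.
under eq_bigr do rewrite mulr_sumr.
by rewrite exchange_big.
Qed.

Hypothesis symQ : symmetric_quiver s t.

Definition Aij (i j : I) := enum [pred a | (s a == i) && (t a == j)].
Definition rho (a : E) : E := nth a (Aij (t a) (s a)) (index a (Aij (s a) (t a))).

Lemma rho_mem a : rho a \in Aij (t a) (s a).
Proof.
apply: mem_nth; rewrite -!cardE -symQ cardE index_mem mem_enum.
by rewrite ?inE !eqxx.
Qed.

Lemma rho_s a : s (rho a) = t a.
Proof. by have := rho_mem a; rewrite mem_enum inE => /andP[/eqP -> _]. Qed.
Lemma rho_t a : t (rho a) = s a.
Proof. by have := rho_mem a; rewrite mem_enum inE => /andP[_ /eqP ->]. Qed.

Lemma rho_inj : injective rho.
Proof.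
move=> a a' e.
have et : t a = t a' by rewrite -rho_s e rho_s.
have es : s a = s a' by rewrite -rho_t e rho_t.
move: e; rewrite /rho -et -es.
have ma : a \in Aij (s a) (t a) by rewrite mem_enum inE !eqxx.
have ma' : a' \in Aij (s a) (t a) by rewrite mem_enum inE es et !eqxx.
have sz : size (Aij (s a) (t a)) = size (Aij (t a) (s a)) by rewrite -!cardE symQ.
have i1 : (index a (Aij (s a) (t a)) < size (Aij (t a) (s a)))%N by rewrite -sz index_mem.
have i2 : (index a' (Aij (s a) (t a)) < size (Aij (t a) (s a)))%N by rewrite -sz index_mem.
rewrite [in RHS](set_nth_default a a' i2) => /eqP.
rewrite nth_uniq ?enum_uniq // => /eqP e.
by rewrite -(nth_index a ma) e nth_index.
Qed.

Lemma tagged_cast (i j : I) (e : i = j) (y : 'I_(d j)) :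
  Tagged (fun i => 'I_(d i)) (cast_ord (congr1 d (esym e)) y) = Tagged (fun i => 'I_(d i)) y.
Proof. by move: y; case: j / e => y; rewrite cast_ord_id. Qed.

Definition sigma (b : Wi) : Wi :=
  Tagged (fun a => ('I_(d (s a)) * 'I_(d (t a)))%type)
    (cast_ord (congr1 d (esym (rho_s (tag b)))) (tagged b).2,
     cast_ord (congr1 d (esym (rho_t (tag b)))) (tagged b).1).

Lemma wsrc_sigma b : wsrc (sigma b) = wtgt b.
Proof. by rewrite /Defs.wsrc /Defs.wtgt /= tagged_cast. Qed.
Lemma wtgt_sigma b : wtgt (sigma b) = wsrc b.
Proof. by rewrite /Defs.wsrc /Defs.wtgt /= tagged_cast. Qed.

Lemma Wi_ext (b b' : Wi) : tag b = tag b' -> wsrc b = wsrc b' -> wtgt b = wtgt b' -> b = b'.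
Proof.
case: b => a [x y]; case: b' => a' [x' y'] /= ea; subst a'.
rewrite /Defs.wsrc /Defs.wtgt /= => ex ey.
have := congr1 (tagged_as (Tagged (fun i => 'I_(d i)) x)) ex; rewrite !tagged_asE => {}ex.
have := congr1 (tagged_as (Tagged (fun i => 'I_(d i)) y)) ey; rewrite !tagged_asE => {}ey.
by rewrite ex ey.
Qed.

Lemma sigma_inj : injective sigma.
Proof.
move=> b b' e; apply: Wi_ext.
- by apply: rho_inj; have := congr1 tag e.
- by rewrite -wtgt_sigma e wtgt_sigma.
- by rewrite -wsrc_sigma e wsrc_sigma.
Qed.

Lemma wt_sigma b k : wt (sigma b) k = - wt b k.
Proof. by rewrite /Defs.wt wsrc_sigma wtgt_sigma opprB. Qed.

Lemma pairing_sigma l b : pairing l (wt (sigma b)) = - pairing l (wt b).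
Proof. by rewrite !pairing_wt wsrc_sigma wtgt_sigma -intrN opprB. Qed.


Lemma pairing_rep (l : K -> int) (chi : K -> R) (x : Wi -> R) (c : R) :
  (forall k, chi k = \sum_b x b * wt b k + c * tauR k) ->
  pairing l chi = \sum_b x b * pairing l (wt b) + c * pairing l tauR.
Proof. by move=> H; rewrite -pairing_lin /pairing; apply: eq_bigr => k _; rewrite H. Qed.

Lemma sym_sum (l : K -> int) :
  \sum_(b | pairing l (wt b) < 0) pairing l (wt b) =
  - \sum_(b | 0 < pairing l (wt b)) pairing l (wt b).
Proof.
rewrite (reindex_inj sigma_inj) /=.
under eq_bigl do rewrite pairing_sigma oppr_lt0.
under eq_bigr do rewrite pairing_sigma.
by rewrite sumrN.
Qed.

Lemma tt_forced (l : K -> int) (tt : Wi -> R) :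
  (forall b, 0 <= tt b <= 1) ->
  \sum_b tt b * pairing l (wt b) = \sum_(b | pairing l (wt b) < 0) pairing l (wt b) ->
  forall b, (pairing l (wt b) < 0 -> tt b = 1) /\ (0 < pairing l (wt b) -> tt b = 0).
Proof.
move=> Htt H.
pose g b := tt b * pairing l (wt b) - (if pairing l (wt b) < 0 then pairing l (wt b) else 0).
have g0 : forall b, 0 <= g b.
  move=> b; rewrite /g; have /andP[h0 h1] := Htt b.
  case: ifP => hp.
    by rewrite -[X in _ - X]mul1r -mulrBl; apply: mulr_le0 => //; [lra | apply: ltW].
  by rewrite subr0 mulr_ge0 // leNgt hp.
have gs : \sum_b g b = 0.
  by rewrite /g sumrB H -big_mkcond subrr.
move=> b; have Hg := psumr_eq0P (fun b _ => g0 b) gs (i:=b) isT.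
rewrite /g; split=> hp.
  move: Hg; rewrite /g hp -[X in _ - X]mul1r -mulrBl => /eqP; rewrite mulf_eq0 => /orP[|/eqP]; last by lra.
  by rewrite subr_eq0 => /eqP.
move: Hg; rewrite /g ltNge (ltW hp) /= subr0 => /eqP; rewrite mulf_eq0 => /orP[/eqP //|/eqP]; lra.
Qed.

Lemma converse_lem (r : R) (l : K -> int) (chi : K -> R) :
  SG_cochar l -> in_rbW s t r chi -> of_form s t false r l chi -> in_F s t r l chi.
Proof.
move=> Hl Hr [cb [c [Hn Hp Hz Hc]]]; split=> //.
rewrite /in_H (pairing_rep l Hc) pairing_tau // mulr0 addr0 pairing_Npos.
rewrite [X in X + _](bigID (fun b => 0 < pairing l (wt b))) /= [X in _ + X + _]big1 ?addr0.
  by rewrite mulr_sumr -big_split /= big1 // => b hb; rewrite Hp // mulNr addNr.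
move=> b; rewrite -leNgt le_eqVlt => /orP[/eqP ->|/Hn ->]; by rewrite ?mulr0 ?mul0r.
Qed.

Lemma main_lem (r : R) (l : K -> int) (chi : K -> R) :
  SG_cochar l -> 0 <= r -> in_rbW s t r chi -> in_H s t r l chi -> of_form s t false r l chi.
Proof.
move=> Hl r0 [w [[tt [c [Htt Hw]]] Hchi]] HH.
have forced : 0 < r -> forall b, (pairing l (wt b) < 0 -> tt b = 1) /\ (0 < pairing l (wt b) -> tt b = 0).
  move=> rp; apply: tt_forced => //.
  have Hc : forall k, chi k = \sum_b (r * tt b) * wt b k + (r * c) * tauR k.
    by move=> k; rewrite Hchi Hw mulrDr mulr_sumr mulrA; congr (_ + _); apply: eq_bigr => b _; rewrite mulrA.
  move: HH; rewrite /in_H (pairing_rep l Hc) pairing_tau // mulr0 addr0 pairing_Npos.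
  under eq_bigr do rewrite -mulrA.
  rewrite -mulr_sumr -mulrDr => /eqP; rewrite mulf_eq0 gt_eqF //= addr_eq0 => /eqP ->.
  by rewrite sym_sum.
exists (fun b => - r * tt (sigma b)), (r * c); split.
- move=> b hb; have [->|rp] := eqVneq r 0; first by rewrite oppr0 mul0r.
  have rp' : 0 < r by rewrite lt_def rp.
  by rewrite (proj2 (forced rp' (sigma b))) ?mulr0 // pairing_sigma oppr_gt0.
- move=> b hb; have [->|rp] := eqVneq r 0; first by rewrite oppr0 mul0r.
  have rp' : 0 < r by rewrite lt_def rp.
  by rewrite (proj1 (forced rp' (sigma b))) ?mulr1 // pairing_sigma oppr_lt0.
- move=> b _ /=; have /andP[h0 h1] := Htt (sigma b); split; nra.
- move=> k; rewrite Hchi Hw mulrDr mulrA; congr (_ + _).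
  rewrite (reindex_inj sigma_inj) /= mulr_sumr; apply: eq_bigr => b _.
  by rewrite wt_sigma; ring.
Qed.

Lemma conseq_lem (r : R) (l mu : K -> int) :
  0 < r -> SG_cochar l -> SG_cochar mu ->
  (forall psi, in_F s t r mu psi -> in_F s t r l psi) -> cochar_ge R s t mu l.
Proof.
move=> rp Hl Hmu Hsub.
pose tt b : R := if pairing mu (wt b) < 0 then 1 else 0.
have Htt : forall b, 0 <= tt b <= 1 by move=> b; rewrite /tt; case: ifP => _; lra.
pose psi k := \sum_b (r * tt b) * wt b k + 0 * tauR k.
have Hrb : in_rbW s t r psi.
  exists (fun k => \sum_b tt b * wt b k + 0 * tauR k); split.
    by exists tt, 0; split.
  by move=> k; rewrite /psi !mul0r !addr0 mulr_sumr; apply: eq_bigr => b _; rewrite mulrA.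
have Hrep : forall k, psi k = \sum_b (r * tt b) * wt b k + 0 * tauR k by [].
have key : forall (m : K -> int), in_H s t r m psi ->
    \sum_b tt b * pairing m (wt b) = \sum_(b | pairing m (wt b) < 0) pairing m (wt b).
  move=> m; rewrite /in_H (pairing_rep m Hrep) mul0r addr0 pairing_Npos.
  under eq_bigr do rewrite -mulrA.
  rewrite -mulr_sumr -mulrDr => /eqP; rewrite mulf_eq0 gt_eqF //= addr_eq0 => /eqP ->.
  by rewrite sym_sum.
have HFmu : in_F s t r mu psi.
  split=> //; rewrite /in_H (pairing_rep mu Hrep) mul0r addr0 pairing_Npos.
  under eq_bigr do rewrite -mulrA.
  rewrite -mulr_sumr -mulrDr.
  have -> : \sum_b tt b * pairing mu (wt b) = \sum_(b | pairing mu (wt b) < 0) pairing mu (wt b).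
    rewrite [RHS]big_mkcond /=; apply: eq_bigr => b _; rewrite /tt; case: ifP => _; ring.
  by rewrite sym_sum addNr mulr0.
have [HHl _] := Hsub psi HFmu.
have F := tt_forced Htt (key l HHl).
move=> b hb.
have := proj1 (F (sigma b)); rewrite pairing_sigma oppr_lt0 => /(_ hb).
rewrite /tt pairing_sigma oppr_lt0; case: ifP => // _ H10; exfalso; move: H10; apply/eqP; rewrite eq_sym oner_eq0.
done.
Qed.


Lemma sum_pickW (F : Wi -> R) (y : Wi) : \sum_x (x == y)%:R * F x = F y.
Proof.
rewrite (bigD1 y) //= eqxx mul1r big1 ?addr0 // => k /negbTE ->; by rewrite mul0r.
Qed.

Section Moreover.
Variables (r : R) (l : K -> int) (chi : K -> R) (c0 : R).
Local Notation p b := (pairing l (wt b)).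

Definition valid (cb : Wi -> R) : Prop :=
  [/\ forall b, p b < 0 -> cb b = 0,
      forall b, 0 < p b -> cb b = - r,
      forall b, p b = 0 -> - r <= cb b /\ cb b <= 0
    & forall k, chi k = \sum_b cb b * wt b k + c0 * tauR k].

Definition compat (cb dl : Wi -> R) : Prop :=
  forall b, [/\ dl b != 0 -> p b = 0, 0 < dl b -> cb b < 0 & dl b < 0 -> - r < cb b].

Definition arc (cb : Wi -> R) : rel K := fun x z =>
  [exists b, (p b == 0) && ((((wsrc b == x) && (wtgt b == z)) && (cb b < 0)) ||
                            (((wsrc b == z) && (wtgt b == x)) && (- r < cb b)))].

Definition ek (y : K) : K -> R := fun k => (k == y)%:R.

Lemma compat_add cb d1 d2 : compat cb d1 -> compat cb d2 -> compat cb (fun b => d1 b + d2 b).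
Proof.
move=> H1 H2 b; have [a1 b1 c1] := H1 b; have [a2 b2 c2] := H2 b; split.
- move=> h; have [e|ne] := eqVneq (d1 b) 0; last exact: a1.
  by apply: a2; apply: contra h => /eqP e2; rewrite e e2 addr0.
- move=> h; case: (ltrP 0 (d1 b)) => h1; first exact: b1.
  by apply: b2; lra.
- move=> h; case: (ltrP (d1 b) 0) => h1; first exact: c1.
  by apply: c2; lra.
Qed.

Lemma compat_pos cb b0 : p b0 = 0 -> cb b0 < 0 -> compat cb (fun b => (b == b0)%:R).
Proof.
move=> h0 h1 b; case: (eqVneq b b0) => [->|ne] /=; split=> //; rewrite ?eqxx ?ltxx //; lra.
Qed.

Lemma compat_neg cb b0 : p b0 = 0 -> - r < cb b0 -> compat cb (fun b => - (b == b0)%:R).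
Proof.
move=> h0 h1 b; case: (eqVneq b b0) => [->|ne] /=; split=> //; rewrite ?eqxx ?oppr0 ?ltxx //; lra.
Qed.

Lemma path_delta cb : forall q x, path (arc cb) x q ->
  exists dl, compat cb dl /\ forall k, \sum_b dl b * wt b k = ek (last x q) k - ek x k.
Proof.
elim=> [|z q IH] x /=.
  move=> _; exists (fun _ => 0); split; first by move=> b; split=> //; rewrite ?eqxx ?ltxx.
  by move=> k; rewrite big1 ?subrr // => b _; rewrite mul0r.
case/andP=> hxz hq; have [d' [hc' hs']] := IH z hq.
case/existsP: hxz => b /andP[/eqP hz /orP[/andP[/andP[/eqP hs /eqP ht] hc]|/andP[/andP[/eqP hs /eqP ht] hc]]].
  exists (fun b' => (b' == b)%:R + d' b'); split.
    by apply: compat_add => //; apply: compat_pos.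
  move=> k; under eq_bigr do rewrite mulrDl.
  rewrite big_split /= sum_pickW hs' /Defs.wt hs ht /ek; ring.
exists (fun b' => - (b' == b)%:R + d' b'); split.
  by apply: compat_add => //; apply: compat_neg.
move=> k; under eq_bigr do rewrite mulrDl mulNr.
rewrite big_split /= sumrN sum_pickW hs' /Defs.wt hs ht /ek; ring.
Qed.

Lemma perturb cb dl : valid cb -> compat cb dl -> (forall k, \sum_b dl b * wt b k = 0) ->
  exists2 eps, 0 < eps & valid (fun b => cb b + eps * dl b).
Proof.
move=> [Hn Hp Hz Hc] Hd Hs.
pose sl b := if 0 < dl b then - cb b / dl b else if dl b < 0 then (cb b + r) / (- dl b) else 1.
have slp : forall b, 0 < sl b.
  move=> b; rewrite /sl; have [_ h2 h3] := Hd b.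
  case: ifP => h; first by apply: divr_gt0 => //; rewrite oppr_gt0; apply: h2.
  case: ifP => h'; last by [].
  by apply: divr_gt0; [have := h3 h'; lra | rewrite oppr_gt0].
pose S := \sum_b (sl b)^-1.
have Sge : forall b, (sl b)^-1 <= S.
  move=> b; rewrite /S (bigD1 b) //= lerDl; apply: sumr_ge0 => b' _.
  by rewrite invr_ge0 ltW.
have S0 : 0 <= S by apply: sumr_ge0 => b' _; rewrite invr_ge0 ltW.
pose eps := (1 + S)^-1.
have epsp : 0 < eps by rewrite /eps invr_gt0; lra.
have epsS : eps * (1 + S) = 1 by rewrite /eps mulVf //; apply/eqP => e; lra.
have epsle : forall b, eps <= sl b.
  move=> b; have := Sge b; have := slp b; have := divff (lt0r_neq0 (slp b)).
  rewrite -/(sl b) => e1 h1 h2.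
  set x := (sl b)^-1 in e1 h2 *.
  nra.
exists eps => //; split.
- move=> b hb; rewrite Hn //; have [a _ _] := Hd b.
  have -> : dl b = 0 by apply/eqP; apply: contraT => /a h; move: hb; rewrite h ltxx.
  by rewrite mulr0 addr0.
- move=> b hb; rewrite Hp //; have [a _ _] := Hd b.
  have -> : dl b = 0 by apply/eqP; apply: contraT => /a h; move: hb; rewrite h ltxx.
  by rewrite mulr0 addr0.
- move=> b hb; have [h1 h2] := Hz b hb; have [_ b2 c2] := Hd b.
  have e := epsle b; move: e; rewrite /sl.
  case: ifP => hd.
    have hc := b2 hd.
    have hq : - cb b / dl b * dl b = - cb b by rewrite divfK // gt_eqF.
    move: hq; set q := - cb b / dl b => hq e; split; nra.
  case: ifP => hd'.
    have hc := c2 hd'.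
    have hq : (cb b + r) / - dl b * - dl b = cb b + r by rewrite divfK // oppr_eq0 lt_eqF.
    move: hq; set q := (cb b + r) / - dl b => hq e; split; nra.
  have -> : dl b = 0 by apply/eqP; rewrite eq_le !leNgt hd hd'.
  by rewrite mulr0 addr0.
- move=> k; rewrite Hc; congr (_ + _).
  under [RHS]eq_bigr do rewrite mulrDl.
  rewrite big_split /= [X in _ = _ + X](_ : _ = eps * \sum_b dl b * wt b k).
    by rewrite Hs mulr0 addr0.
  by rewrite mulr_sumr; apply: eq_bigr => b _; rewrite mulrA.
Qed.

Lemma unsat cb e0 : 0 < r -> SG_cochar l -> in_rbW s t r chi ->
  (forall mu, SG_cochar mu -> cochar_gt R s t mu l -> ~ in_F s t r mu chi) ->
  valid cb -> p e0 = 0 -> cb e0 = - r -> exists2 cb', valid cb' & - r < cb' e0.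
Proof.
move=> rp Hl Hrb Hint Hv h0 he.
case: (boolP (connect (arc cb) (wtgt e0) (wsrc e0))) => hc.
  case/connectP: hc => q hq hu.
  have [dp [hcp hsp]] := path_delta hq.
  pose dl b := (b == e0)%:R + dp b.
  have hcd : compat cb dl by apply: compat_add => //; apply: compat_pos => //; lra.
  have hs : forall k, \sum_b dl b * wt b k = 0.
    move=> k; under eq_bigr do rewrite mulrDl.
    by rewrite big_split /= sum_pickW hsp -hu /Defs.wt /ek; ring.
  have [eps ep hv'] := perturb Hv hcd hs.
  exists (fun b => cb b + eps * dl b) => //.
  have : 0 <= dp e0.
    rewrite leNgt; apply/negP => h; have [_ _ c] := hcp e0; have := c h; rewrite he; lra.
  rewrite /dl eqxx he /= => h; nra.
exfalso.
pose S k := connect (arc cb) (wtgt e0) k.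
pose nu k : int := if S k then 1 else 0.
pose N := #|{: K}|.
have Npos : (0 < N)%N by apply/card_gt0P; exists (wsrc e0).
have Nz : (0 < N%:Z)%R by rewrite ltz_nat.
pose mu k : int := N%:Z * (2 * l k + nu k) - \sum_k' nu k'.
have mudiff : forall b, mu (wtgt b) - mu (wsrc b) =
   N%:Z * (2 * (l (wtgt b) - l (wsrc b)) + (nu (wtgt b) - nu (wsrc b))).
  by move=> b; rewrite /mu; ring.
have pmu : forall b, pairing mu (wt b) =
   (N%:Z * (2 * (l (wtgt b) - l (wsrc b)) + (nu (wtgt b) - nu (wsrc b))))%:~R.
  by move=> b; rewrite pairing_wt mudiff.
have pl : forall b, p b = (l (wtgt b) - l (wsrc b))%:~R by move=> b; rewrite pairing_wt.
have [Hn Hp Hz Hc] := Hv.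
have cut1 : forall b, p b = 0 -> S (wsrc b) -> ~~ S (wtgt b) -> cb b = 0.
  move=> b hb h1 h2; have [z1 z2] := Hz b hb.
  case: (ltrP (cb b) 0) => hlt; last by lra.
  have ha : arc cb (wsrc b) (wtgt b).
    by apply/existsP; exists b; rewrite hb eqxx !eqxx hlt.
  by move: h2; rewrite /S (connect_trans h1 (connect1 ha)).
have cut2 : forall b, p b = 0 -> ~~ S (wsrc b) -> S (wtgt b) -> cb b = - r.
  move=> b hb h1 h2; have [z1 z2] := Hz b hb.
  case: (ltrP (- r) (cb b)) => hlt; last by lra.
  have ha : arc cb (wtgt b) (wsrc b).
    by apply/existsP; exists b; rewrite hb eqxx !eqxx hlt orbT.
  by move: h1; rewrite /S (connect_trans h2 (connect1 ha)).
have SGmu : SG_cochar mu.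
  rewrite /SG_cochar /mu sumrB -mulr_sumr big_split /= -mulr_sumr.
  have L0 : \sum_k l k = 0 := Hl.
  rewrite L0 mulr0 add0r sumr_const /N. rewrite -mulr_natl. apply/eqP; rewrite subr_eq0; apply/eqP. congr (_ * _); by rewrite natz.
apply: (Hint mu) => //.
- split.
  + move=> b; rewrite pl pmu ltr0z ltr0z pmulr_rgt0 // /nu.
    by case: (S (wtgt b)); case: (S (wsrc b)); lia.
  + move=> Hge; have := Hge e0; rewrite h0 ltxx pmu ltr0z pmulr_rgt0 //.
    have : S (wtgt e0) by rewrite /S connect0.
    rewrite /nu => ->; move: hc; rewrite /S => /negbTE ->.
    have hl0 : l (wtgt e0) - l (wsrc e0) = 0 by apply/eqP; rewrite -(intr_eq0 R) -pl h0.
    by move=> H; suff : false by []; apply: H; rewrite hl0.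
- apply: (@converse_lem r mu chi) => //; exists cb, c0; split => //.
  + move=> b; rewrite pmu ltrz0 pmulr_rlt0 // => h.
    case: (ltrgtP (l (wtgt b) - l (wsrc b)) 0) => hP.
    * by apply: Hn; rewrite pl ltrz0.
    * by move: h; rewrite /nu; case: (S (wtgt b)); case: (S (wsrc b)); lia.
    * have hb : p b = 0 by rewrite pl hP.
      move: h; rewrite /nu; case h1 : (S (wtgt b)); case h2 : (S (wsrc b)); try lia.
      by move=> _; apply: cut1 => //; rewrite h1.
  + move=> b; rewrite pmu ltr0z pmulr_rgt0 // => h.
    case: (ltrgtP (l (wtgt b) - l (wsrc b)) 0) => hP.
    * by move: h; rewrite /nu; case: (S (wtgt b)); case: (S (wsrc b)); lia.
    * by apply: Hp; rewrite pl ltr0z.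
    * have hb : p b = 0 by rewrite pl hP.
      move: h; rewrite /nu; case h1 : (S (wtgt b)); case h2 : (S (wsrc b)); try lia.
      by move=> _; apply: cut2 => //; rewrite h2.
  + move=> b; rewrite pmu => /eqP; rewrite intr_eq0 mulf_eq0 (gt_eqF Nz) /= => /eqP h.
    apply: Hz; rewrite pl; move: h; rewrite /nu.
    by case: (S (wtgt b)); case: (S (wsrc b)) => h; rewrite (_ : l (wtgt b) - l (wsrc b) = 0) ?mulr0z //; lia.
Qed.

End Moreover.

Lemma moreover_lem (r : R) (l : K -> int) (chi : K -> R) :
  0 < r -> SG_cochar l -> in_rbW s t r chi -> in_Fint s t r l chi -> of_form s t true r l chi.
Proof.
move=> rp Hl Hrb [HF Hint].
have [cb [c0 [Hn Hp Hz Hc]]] := main_lem Hl (ltW rp) Hrb HF.1.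
have Hv : valid r l chi c0 cb by split.
have step : forall b, exists cb', valid r l chi c0 cb' /\ (pairing l (wt b) = 0 -> - r < cb' b).
  move=> b; case: (eqVneq (pairing l (wt b)) 0) => hb; last first.
    by exists cb; split => // e; rewrite e eqxx in hb.
  have [h1 h2] := Hz b hb; case: (eqVneq (cb b) (- r)) => he.
    by have [cb' hv' hlt] := unsat rp Hl Hrb Hint Hv hb he; exists cb'.
  by exists cb; split => // _; rewrite lt_neqAle eq_sym he h1.
have [F HF'] := choice step.
case: (posnP #|{: Wi}|) => hn.
  exists cb, c0; split => // b; exfalso.
  have : (0 < #|{: Wi}|)%N by apply/card_gt0P; exists b.
  by rewrite hn.
pose n : R := (#|{: Wi}|)%:R.
have np : 0 < n by rewrite ltr0n.
exists (fun b => (\sum_b' F b' b) / n), c0; split.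
- move=> b hb; rewrite big1 ?mul0r // => b' _.
  by have [[Hn' _ _ _] _] := HF' b'; exact: Hn' b hb.
- move=> b hb; rewrite (eq_bigr (fun _ => - r)); last first.
    by move=> b' _; have [[_ Hp' _ _] _] := HF' b'; exact: Hp' b hb.
  by rewrite sumr_const -mulr_natr mulfK // gt_eqF.
- move=> b hb /=; split.
    rewrite ltr_pdivlMr //.
    have hge : forall b', - r <= F b' b by move=> b'; have [[_ _ Hz' _] _] := HF' b'; exact: (Hz' b hb).1.
    have hlt : - r < F b b by have [_ h] := HF' b; exact: h hb.
    have : 0 < \sum_b' (F b' b + r).
      rewrite (bigD1 b) //=.
      have : 0 <= \sum_(b' | b' != b) (F b' b + r) by apply: sumr_ge0 => b' _; have := hge b'; lra.
      lra.
    rewrite big_split /= sumr_const -mulr_natr -/n => h; nra.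
  rewrite ler_pdivrMr // mul0r; apply: sumr_le0 => b' _.
  by have [[_ _ Hz' _] _] := HF' b'; exact: (Hz' b hb).2.
- move=> k.
  have Hk : forall b', \sum_b F b' b * wt b k = chi k - c0 * tauR k.
    by move=> b'; have [[_ _ _ Hc'] _] := HF' b'; rewrite Hc' addrK.
  rewrite (_ : \sum_b _ = chi k - c0 * tauR k) ?subrK //.
  transitivity (\sum_b' (\sum_b F b' b * wt b k) / n).
    under eq_bigr do rewrite mulr_suml mulr_suml.
    rewrite exchange_big /=; apply: eq_bigr => b' _; rewrite mulr_suml.
    by apply: eq_bigr => b _; rewrite mulrAC.
  under eq_bigr do rewrite Hk.
  by rewrite sumr_const -mulr_natr -/n divfK // gt_eqF.
Qed.

End Aux.

Theorem proposition3p2 (R : realType) (I E : finType) (s t : E -> I)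
    (d : I -> nat) :
  symmetric_quiver s t -> standing_assumption s t d ->
  [/\ (* main claim *)
      forall (r : R) (l : {i : I & 'I_(d i)} -> int) (chi : {i : I & 'I_(d i)} -> R),
        SG_cochar l -> r_of_is s t chi r -> in_F s t r l chi ->
        of_form s t false r l chi,
      (* converse *)
      forall (r : R) (l : {i : I & 'I_(d i)} -> int) (chi : {i : I & 'I_(d i)} -> R),
        SG_cochar l -> 0 <= r -> in_rbW s t r chi -> of_form s t false r l chi ->
        in_F s t r l chi,
      (* consequence *)
      forall (r : R) (l mu : {i : I & 'I_(d i)} -> int),
        0 < r -> SG_cochar l -> SG_cochar mu ->
        (forall psi, in_F s t r mu psi -> in_F s t r l psi) ->
        cochar_ge R s t mu l
    & (* moreover *)
      forall (r : R) (l : {i : I & 'I_(d i)} -> int) (chi : {i : I & 'I_(d i)} -> R),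
        0 < r -> SG_cochar l -> r_of_is s t chi r -> in_Fint s t r l chi ->
        of_form s t true r l chi].
Proof.
move=> symQ _; split.
- move=> r l chi Hl [r0 Hrb _] [HH _]; exact: (main_lem symQ Hl r0 Hrb HH).
- move=> r l chi Hl _ Hrb Hof; exact: converse_lem.
- move=> r l mu rp Hl Hmu Hsub; exact: (conseq_lem symQ rp Hl Hmu Hsub).
- move=> r l chi rp Hl [_ Hrb _] Hint; exact: (moreover_lem symQ rp Hl Hrb Hint).
Qed.
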